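(* Let $n\ge2$, $\mathcal{L}_n=\{(i,j)\in[n]^2:i>j\}$, $\bar n=|\mathcal{L}_n|=n(n-1)/2$. For $\Omega\in[0,1]^{\mathcal{L}_n}$ let $P^{(\bar n)}_\Omega=\bigotimes_{(i,j)\in\mathcal{L}_n}\mathrm{Bern}(\Omega_{i,j})$ be the distribution of $Y=(Y_{i,j})_{(i,j)\in\mathcal{L}_n}\in\{0,1\}^{\mathcal{L}_n}$, and let $q^\natural(\Omega,Y)=\prod_{(i,j)\in\mathcal{L}_n}e^{-(Y_{i,j}-\Omega_{i,j})^2}$. Let $\bar\rho>0$. Then for all $\Omega_0,\Omega_1\in[0,1]^{\mathcal{L}_n}$, $$P^{(\bar n)}_{\Omega_0}\Big(\frac{q^\natural(\Omega_1,Y)}{q^\natural(\Omega_0,Y)}\Big)\le e^{-\frac12\bar nd^2(\Omega_0,\Omega_1)},\qquad P^{(\bar n)}_{\Omega_0}\Big(\frac{q^\natural(\Omega_0,Y)}{q^\natural(\Omega_1,Y)}\Big)^{\bar\rho}\le e^{\frac{\bar\rho(\bar\rho+2)}{2}\bar nd^2(\Omega_0,\Omega_1)},$$ where $d(\Omega_0,\Omega_1)=\big(\frac{2}{n(n-1)}\sum_{(i,j)\in\mathcal{L}_n}(\Omega_{0,i,j}-\Omega_{1,i,j})^2\big)^{1/2}$.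
   Context: $P g$ denotes the expectation of $g$ under $P$. *)

(* Defs.v *)
From mathcomp Require Import all_boot all_order all_algebra.
From mathcomp Require Import all_classical all_reals all_analysis.
Set Implicit Arguments. Unset Strict Implicit. Unset Printing Implicit Defensive.
Import Order.TTheory GRing.Theory Num.Theory.
Local Open Scope ring_scope.

Definition Ln (n : nat) := {p : 'I_n * 'I_n | (p.2 < p.1)%N}.

Definition param01 (R : realType) n (Om : {ffun Ln n -> R}) :=
  forall l, 0 <= Om l <= 1.

Definition nbar (n : nat) : nat := #|{: Ln n}|.

Definition bern_pmf (R : realType) (p : R) (y : bool) : R :=
  if y then p else 1 - p.

Definition EP (R : realType) n (Om : {ffun Ln n -> R})
  (g : {ffun Ln n -> bool} -> R) : R :=
  \sum_(Y : {ffun Ln n -> bool}) (\prod_(l : Ln n) bern_pmf (Om l) (Y l)) * g Y.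

Definition qnat (R : realType) n (Om : {ffun Ln n -> R}) (Y : {ffun Ln n -> bool}) : R :=
  \prod_(l : Ln n) expR (- ((Y l)%:R - Om l) ^+ 2).

Definition dist (R : realType) n (Om0 Om1 : {ffun Ln n -> R}) : R :=
  Num.sqrt (2 / (n * (n - 1))%:R * \sum_(l : Ln n) (Om0 l - Om1 l) ^+ 2).

(* Main.v *)
Require Import Defs.
From mathcomp Require Import all_boot all_order all_algebra.
From mathcomp Require Import all_classical all_reals all_analysis.
From mathcomp Require Import ring lra zify.
Import Order.TTheory GRing.Theory Num.Theory.
Local Open Scope ring_scope.

Section S.
Variable R : realType.
Lemma mvt_all (f df : R -> R) (a b : R) : a <= b -> (forall x : R, is_derive x (1:R) f (df x)) ->
  exists c, a <= c <= b /\ f b - f a = df c * (b - a).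
Proof.
move=> ab H; have [|c c1 c2] := MVT_segment ab (fun x _ => H x).
  apply: derivable_within_continuous => r _; by case: (H r).
by exists c; split => //; move: c1; rewrite in_itv.
Qed.

Arguments mvt_all [f df a b].
Variable p : R.
Hypothesis p0 : 0 <= p.
Hypothesis p1 : p <= 1.
Let D (s : R) := p * expR s + (1 - p).
Lemma D_gt0 s : 0 < D s.
Proof.
rewrite /D; case: (ltrP p 1) => hp.
  by apply: ltr_wpDl; [rewrite mulr_ge0 // ltW // expR_gt0 | rewrite subr_gt0].
have -> : p = 1 by apply/le_anti; rewrite p1 hp.
by rewrite mul1r subrr addr0 expR_gt0.
Qed.
Lemma D_der (x : R) : is_derive x (1:R) D (p * expR x).
Proof. rewrite /D; apply: is_derive_eq; by rewrite addr0. Qed.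

Let g (s : R) := s / 4 + p - p * expR s / D s.
Lemma g_der (x : R) : is_derive x (1:R) g (4^-1 - p * expR x * (1 - p) / (D x)^+2).
Proof.
have hV : is_derive x (1:R) (fun y => (D y)^-1) (- (D x)^-2 *: (p*expR x)).
  by apply: is_deriveV; [rewrite gt_eqF // D_gt0 | exact: D_der].
rewrite /g; apply: is_derive_eq.
have hD : D x != 0 by rewrite gt_eqF // D_gt0.
rewrite /GRing.scale /= -/(D x) /D in hD *.
by by field.
Qed.
Let h (s : R) := s ^+ 2 / 8 + s * p - ln (D s).
Lemma h_der (x : R) : is_derive x (1:R) h (g x).
Proof.
have hl := is_derive1_ln (D_gt0 x).
rewrite /h; apply: is_derive_eq.
have hD : D x != 0 by rewrite gt_eqF // D_gt0.
rewrite /GRing.scale /= /g -/(D x) /D in hD *.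
by by field.
Qed.

Lemma dg_ge0 (x : R) : 0 <= 4^-1 - p * expR x * (1 - p) / (D x)^+2.
Proof.
have hD := D_gt0 x.
rewrite subr_ge0 ler_pdivrMr ?exprn_gt0 //.
have := sqr_ge0 (p * expR x - (1 - p)).
rewrite /D in hD *; set e := expR x in hD *.
move=> H; nra.
Qed.

Lemma g0 : g 0 = 0.
Proof. rewrite /g /D expR0 mulr1 [p + _]addrC subrK divr1 mul0r add0r; exact: subrr. Qed.

Lemma g_pos s : 0 <= s -> 0 <= g s.
Proof.
move=> hs; have [c [hc E]] := mvt_all hs g_der.
move: E; rewrite g0 subr0 => ->.
by rewrite mulr_ge0 // ?dg_ge0 // subr0.
Qed.

Lemma g_neg s : s <= 0 -> g s <= 0.
Proof.
move=> hs; have [c [hc E]] := mvt_all hs g_der.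
move: E; rewrite g0 sub0r => /eqP; rewrite eqr_oppLR => /eqP ->.
by rewrite oppr_le0 mulr_ge0 ?dg_ge0 // subr_ge0.
Qed.

Lemma h0 : h 0 = 0.
Proof. by rewrite /h /D expR0 mulr1 [p + _]addrC subrK ln1 expr0n /= !mul0r !add0r oppr0.
Qed.

Lemma h_ge0 s : 0 <= h s.
Proof.
case: (lerP 0 s) => hs.
  have [c [hc E]] := mvt_all hs h_der.
  move: E; rewrite h0 subr0 => ->.
  by rewrite mulr_ge0 // ?subr0 // g_pos //; case/andP: hc.
have [c [hc E]] := mvt_all (ltW hs) h_der.
move: E; rewrite h0 sub0r => /eqP; rewrite eqr_oppLR => /eqP ->.
rewrite oppr_ge0 mulr_le0_ge0 ?g_neg //; first by case/andP: hc.
by rewrite subr_ge0 ltW.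
Qed.

Lemma hoeff s : p * expR (s * (1 - p)) + (1 - p) * expR (- (s * p)) <= expR (s ^+ 2 / 8).
Proof.
have -> : p * expR (s * (1 - p)) + (1 - p) * expR (- (s * p)) = expR (- (s * p)) * D s.
  rewrite /D mulrBr mulr1 expRD; ring.
rewrite -[D s]lnK ?posrE ?D_gt0 // -expRD ler_expR.
have := h_ge0 s; rewrite /h; lra.
Qed.
End S.

Lemma tri2 n : ((\sum_(0 <= i < n) i) * 2 = n * (n - 1))%N.
Proof.
elim: n => [|n IH]; first by rewrite big_geq.
rewrite big_nat_recr //= mulnDl IH; case: n {IH} => // n. rewrite subn1 /=. nia.
Qed.

Lemma card_Ln n : (nbar n * 2 = n * (n - 1))%N.
Proof.
rewrite /nbar card_sig -sum1_card.
rewrite -(pair_big_dep xpredT (fun (i : 'I_n) (j : 'I_n) => (j < i)%N) (fun _ _ => 1%N)) /=.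
rewrite -tri2 big_mkord; congr (_ * _)%N; apply: eq_bigr => i _.
rewrite -(big_ord_widen _ (fun _ => 1%N) (ltnW (ltn_ord i))).
by rewrite sum1_card card_ord.
Qed.

Section Main.
Variable R : realType.

Lemma EP_prod n (Om : {ffun Ln n -> R}) (G : Ln n -> bool -> R) :
  EP Om (fun Y => \prod_l G l (Y l)) = \prod_l \sum_(b : bool) bern_pmf (Om l) b * G l b.
Proof.
rewrite /EP (bigA_distr_bigA (fun l b => bern_pmf (Om l) b * G l b)).
by apply: eq_bigr => Y _; rewrite big_split.
Qed.

Lemma coordK (p q t : R) : 0 <= p -> p <= 1 ->
  \sum_(b : bool) bern_pmf p b * expR (t * (((b : nat)%:R - p) ^+ 2 - ((b : nat)%:R - q) ^+ 2))
  <= expR ((t ^+ 2 / 2 - t) * (p - q) ^+ 2).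
Proof.
move=> p0 p1.
have H := @hoeff R p p0 p1 (2 * t * (q - p)).
rewrite big_bool /= /bern_pmf ?mulr1n ?mulr0n.
have E1 : t * ((1 - p) ^+ 2 - (1 - q) ^+ 2) = - (t * (q - p) ^+ 2) + 2 * t * (q - p) * (1 - p) by ring.
have E0 : t * ((0 - p) ^+ 2 - (0 - q) ^+ 2) = - (t * (q - p) ^+ 2) + - (2 * t * (q - p) * p) by ring.
have E2 : (t ^+ 2 / 2 - t) * (p - q) ^+ 2 = - (t * (q - p) ^+ 2) + (2 * t * (q - p)) ^+ 2 / 8 by field.
rewrite E1 E0 E2 !expRD.
set A := expR (- (t * (q - p) ^+ 2)).
have -> : p * (A * expR (2 * t * (q - p) * (1 - p))) + (1 - p) * (A * expR (- (2 * t * (q - p) * p)))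
  = A * (p * expR (2 * t * (q - p) * (1 - p)) + (1 - p) * expR (- (2 * t * (q - p) * p))) by ring.
by rewrite ler_pM2l // expR_gt0.
Qed.

Lemma bound_t n (Om0 Om1 : {ffun Ln n -> R}) (t : R) : param01 Om0 ->
  EP Om0 (fun Y => \prod_l expR (t * (((Y l : nat)%:R - Om0 l) ^+ 2 - ((Y l : nat)%:R - Om1 l) ^+ 2)))
  <= expR ((t ^+ 2 / 2 - t) * \sum_l (Om0 l - Om1 l) ^+ 2).
Proof.
move=> h0.
rewrite (@EP_prod n Om0 (fun l b => expR (t * (((b : nat)%:R - Om0 l) ^+ 2 - ((b : nat)%:R - Om1 l) ^+ 2)))).
rewrite mulr_sumr expR_sum; apply: ler_prod => l _.
have /andP [p0 p1] := h0 l.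
rewrite coordK // andbT; apply: sumr_ge0 => b _; apply: mulr_ge0; last exact: expR_ge0.
by case: b; rewrite /bern_pmf // subr_ge0.
Qed.

Lemma qnatE n (Om : {ffun Ln n -> R}) Y : qnat Om Y = expR (\sum_l - (((Y l : nat)%:R - Om l) ^+ 2)).
Proof. by rewrite /qnat expR_sum. Qed.

End Main.

Theorem lemma7p3 (R : realType) (n : nat) (rho : R)
  (Om0 Om1 : {ffun Ln n -> R}) :
  (2 <= n)%N -> 0 < rho -> param01 Om0 -> param01 Om1 ->
  EP Om0 (fun Y => qnat Om1 Y / qnat Om0 Y)
    <= expR (- (1 / 2) * (nbar n)%:R * dist Om0 Om1 ^+ 2)
  /\
  EP Om0 (fun Y => powR (qnat Om0 Y / qnat Om1 Y) rho)
    <= expR (rho * (rho + 2) / 2 * (nbar n)%:R * dist Om0 Om1 ^+ 2).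
Proof.
move=> hn hrho h0 h1.
set S := \sum_l (Om0 l - Om1 l) ^+ 2.
have HnS : (nbar n)%:R * dist Om0 Om1 ^+ 2 = S.
  have hS : 0 <= S by apply: sumr_ge0 => l _; exact: sqr_ge0.
  have hc := card_Ln n.
  have hpos : (0 < nbar n)%N by nia.
  have hnz : (nbar n)%:R != 0 :> R by rewrite pnatr_eq0 -lt0n.
  rewrite /dist sqr_sqrtr; last by rewrite mulr_ge0 // divr_ge0.
  rewrite -hc natrM.
  rewrite -/S; field; by [].

split.
- rewrite [X in X <= _](_ : _ = EP Om0 (fun Y => \prod_l expR (1 * (((Y l : nat)%:R - Om0 l) ^+ 2 - ((Y l : nat)%:R - Om1 l) ^+ 2)))); last first.
    rewrite /EP; apply: eq_bigr => Y _; congr (_ * _).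
    rewrite !qnatE -expRB -sumrB expR_sum; apply: eq_bigr => l _; congr expR; ring.
  apply: le_trans (bound_t _ _ _ _ _ h0) _.
  rewrite -mulrA HnS ler_expR -/S le_eqVlt; apply/orP; left; apply/eqP; by field.
-
  rewrite [X in X <= _](_ : _ = EP Om0 (fun Y => \prod_l expR ((- rho) * (((Y l : nat)%:R - Om0 l) ^+ 2 - ((Y l : nat)%:R - Om1 l) ^+ 2)))); last first.
    rewrite /EP; apply: eq_bigr => Y _; congr (_ * _).
    rewrite !qnatE -expRB -expRM -sumrB mulr_suml expR_sum; apply: eq_bigr => l _; congr expR; ring.
  apply: le_trans (bound_t _ _ _ _ _ h0) _.
  rewrite -mulrA HnS ler_expR -/S le_eqVlt; apply/orP; left; apply/eqP; by field.
Qed.
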